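(* For every $l\ge 0$, up to a unit of $\mathbb{Z}[q,q^{-1}]$, $$\mathrm{GCD}(f_{l,0},\dots,f_{l,l})=\prod_{m\ge1}\Phi_m^{t_{l,m}},\qquad t_{l,m}=\begin{cases}\lfloor \tfrac{l+1}{m}\rfloor-1 & 1\le m\le l,\\ 0 & m>l.\end{cases}$$
   Context: In $\mathbb{Z}[q,q^{-1}]$ set $\{i\}_q=q^i-1$, $\{i\}_{q,n}=\{i\}_q\cdots\{i-n+1\}_q$ (equal to $1$ for $n=0$), $\{n\}_q!=\{n\}_{q,n}$, and $f_{l,k}=\{l-k\}_q!\{k\}_q!$ for $0\le k\le l$. GCD is a greatest common divisor in the UFD $\mathbb{Z}[q,q^{-1}]$ (defined up to units $\pm q^j$). $\Phi_m$ is the $m$th cyclotomic polynomial; $\lfloor r\rfloor$ is the floor of $r$. *)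

(* Defs.v *)
From HB Require Import structures.
From mathcomp Require Import all_boot all_order all_algebra all_field.
Set Implicit Arguments. Unset Strict Implicit. Unset Printing Implicit Defensive.
Import GRing.Theory.
Local Open Scope ring_scope.

Definition qbr (i : nat) : {poly int} := 'X^i - 1.

(* {i}_{q,n} = {i}_q {i-1}_q ... {i-n+1}_q  (= 1 for n = 0); used with n <= i. *)
Definition qpoch (i n : nat) : {poly int} := \prod_(j < n) qbr (i - j)%N.

Definition qfact (n : nat) : {poly int} := qpoch n n.

Definition fLK (l k : nat) : {poly int} := qfact (l - k)%N * qfact k.

(* Elements of Z[q,q^{-1}] represented as pairs (p, j) standing for p * q^{-j},
   p in Z[q].  Every Laurent polynomial has such a representation. *)
Definition laurent := ({poly int} * nat)%type.
Definition lpoly (p : {poly int}) : laurent := (p, 0%N).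

(* Divisibility in Z[q,q^{-1}]:  a | b  iff  b = a * c for a Laurent c = (c, k),
   i.e.  b.1 q^{-b.2} = a.1 q^{-a.2} c q^{-k},  cleared of denominators. *)
Definition ldvd (a b : laurent) : Prop :=
  exists (c : {poly int}) (k : nat),
    b.1 * 'X^(a.2 + k) = a.1 * c * 'X^(b.2).

(* g is a greatest common divisor (in the UFD Z[q,q^{-1}], hence determined up
   to units +-q^j) of the family F i, i in I. *)
Definition is_lgcd (I : Type) (F : I -> laurent) (g : laurent) : Prop :=
  (forall i, ldvd g (F i)) /\
  (forall d : laurent, (forall i, ldvd d (F i)) -> ldvd d g).

Definition tLM (l m : nat) : nat :=
  if (1 <= m <= l)%N then ((l.+1 %/ m) - 1)%N else 0%N.

(* Main.v *)
Require Import Defs.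
From HB Require Import structures.
From mathcomp Require Import all_boot all_order all_algebra all_field.
From mathcomp Require Import ring zify.
Import GRing.Theory Num.Theory.
Local Open Scope ring_scope.

Local Notation pZtoQ := (map_poly (intr : int -> rat)).
Lemma comb (F : fieldType) (A B X d : {poly F}) :
  coprimep A B -> d %| X * A -> d %| X * B -> d %| X.
Proof.
case/Bezout_coprimepP => [[u v]] /= H dA dB.
rewrite -[X]mulr1 -(eqp_dvdr _ (eqp_mull X H)) mulrDr.
by apply: dvdp_add; rewrite mulrCA dvdp_mull.
Qed.

Lemma abs_gcd (F : fieldType) (P : nat -> {poly F}) (t : nat -> nat) (d : {poly F})
  (s : seq nat) :
  uniq s -> {in s &, forall i j, i != j -> coprimep (P i) (P j)} ->
  {in s, forall m, exists C, coprimep (P m) C /\ d %| P m ^+ t m * C} ->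
  forall (Y : {poly F}) (e0 : nat -> nat), {in s, forall m, coprimep (P m) Y} ->
  d %| (\prod_(m <- s) P m ^+ e0 m) * Y -> d %| (\prod_(m <- s) P m ^+ t m) * Y.
Proof.
elim: s => [|m s IH]; first by move=> _ _ _ Y e0 _; rewrite !big_nil.
move=> /= /andP[ms us] cop hC Y e0 cY.
rewrite !big_cons => H0.
have [C [cC dC]] := hC m (mem_head _ _).
have H1 : d %| P m ^+ t m * ((\prod_(j <- s) P j ^+ e0 j) * Y).
  apply: (@comb _ (P m ^+ e0 m) C); first exact: coprimep_expl.
    set Q := \prod_(j <- s) _.
    have -> : P m ^+ t m * (Q * Y) * P m ^+ e0 m = P m ^+ t m * (P m ^+ e0 m * Q * Y) by ring.
    exact: dvdp_mull.
  set Q := \prod_(j <- s) _.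
  have -> : P m ^+ t m * (Q * Y) * C = (P m ^+ t m * C) * (Q * Y) by ring.
  exact: dvdp_mulr.
rewrite -mulrA mulrCA; apply: (IH us _ _ (P m ^+ t m * Y) e0).
- by move=> i j iS jS; apply: cop; rewrite inE ?iS ?jS orbT.
- by move=> j js; apply: hC; rewrite inE js orbT.
- move=> j js; rewrite coprimepMr coprimep_expr ?cY ?inE ?js ?orbT //.
  apply: cop; rewrite ?inE ?js ?eqxx ?orbT //.
  by apply/eqP => jm; rewrite -jm js in ms.
- by rewrite mulrCA.
Qed.
Lemma qfact_rec n : qfact n.+1 = ('X^(n.+1) - 1) * qfact n.
Proof.
by rewrite /qfact /qpoch big_ord_recl /= subn0.
Qed.

Lemma prod_dvd_ind n L : (n.+1 < L)%N ->
  \prod_(1 <= m < L) 'Phi_m ^+ (m %| n.+1)%N = 'X^(n.+1) - 1.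
Proof.
move=> nL; rewrite -prod_Cyclotomic //.
rewrite (eq_bigr (fun m => if (m %| n.+1)%N then 'Phi_m else 1)); last first.
  by move=> m _; case: (m %| n.+1)%N; rewrite ?expr1 ?expr0.
rewrite -big_mkcond -big_filter; apply: perm_big; apply: uniq_perm.
- by rewrite filter_uniq // iota_uniq.
- exact: divisors_uniq.
move=> x; rewrite mem_filter mem_index_iota -dvdn_divisors //.
case dx: (x %| n.+1)%N => //=.
have x0 : (0 < x)%N by apply: contraTT dx; rewrite lt0n negbK => /eqP ->.
have := dvdn_leq (ltn0Sn n) dx.
by rewrite x0 /=; move=> h; apply: leq_ltn_trans h nL.
Qed.

Lemma qfactE n L : (n < L)%N -> qfact n = \prod_(1 <= m < L) 'Phi_m ^+ (n %/ m).
Proof.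
elim: n => [|n IH] nL.
  rewrite /qfact /qpoch big_ord0; symmetry; apply: big1 => i _.
  by rewrite div0n expr0.
rewrite qfact_rec IH ?(ltnW nL) // -(@prod_dvd_ind n L nL) -big_split /=.
apply: eq_big_nat => m /andP[m1 _].
by rewrite -exprD divnS.
Qed.

Definition eLK (l k m : nat) : nat := ((l - k) %/ m + k %/ m)%N.

Lemma fLKE l k : (k <= l)%N ->
  fLK l k = \prod_(1 <= m < l.+1) 'Phi_m ^+ eLK l k m.
Proof.
move=> kl; rewrite /fLK (@qfactE (l - k)%N l.+1) ?(@qfactE k l.+1) ?ltnS ?leq_subr //.
by rewrite -big_split /=; apply: eq_bigr => m _; rewrite exprD.
Qed.
Lemma Phi_split1 n m : (0 < n)%N -> (m %| n)%N ->
  exists R, 'X^n - 1 = 'Phi_m * R.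
Proof.
move=> n0 mn; rewrite -prod_Cyclotomic //.
rewrite (bigD1_seq m) ?divisors_uniq -?dvdn_divisors //; by eexists.
Qed.

Lemma Phi_split2 n m1 m2 : (0 < n)%N -> (m1 %| n)%N -> (m2 %| n)%N -> m1 != m2 ->
  exists R, 'X^n - 1 = 'Phi_m1 * 'Phi_m2 * R.
Proof.
move=> n0 m1n m2n ne; rewrite -prod_Cyclotomic //.
rewrite (bigD1_seq m1) ?divisors_uniq -?dvdn_divisors //= -big_filter.
rewrite (bigD1_seq m2) ?filter_uniq ?divisors_uniq //=.
  by eexists; rewrite mulrA.
by rewrite mem_filter eq_sym ne -dvdn_divisors.
Qed.

Lemma cop_Phi i j : (0 < i)%N -> (0 < j)%N -> i != j ->
  coprimep (pZtoQ 'Phi_i) (pZtoQ 'Phi_j).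
Proof.
move=> i0 j0 ij.
have ij0 : (0 < i * j)%N by rewrite muln_gt0 i0 j0.
have [R ER] := @Phi_split2 (i * j) i j ij0 (dvdn_mulr _ (dvdnn _)) (dvdn_mull _ (dvdnn _)) ij.
apply: (@separable_coprime _ ('X^(i * j) - 1)).
  by apply: separable_Xn_sub_1; rewrite pnatr_eq0 -lt0n.
have -> : ('X^(i * j) - 1 : {poly rat}) = pZtoQ ('X^(i * j) - 1).
  by rewrite rmorphB rmorph1 /= map_polyXn.
by rewrite ER !rmorphM /= dvdp_mulIl.
Qed.

Lemma copX_Phi m : (0 < m)%N -> coprimep (pZtoQ 'Phi_m) 'X.
Proof.
move=> m0; have [R ER] := @Phi_split1 m m m0 (dvdnn m).
apply: (@coprimep_dvdr _ ('X^m - 1)).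
  have -> : ('X^m - 1 : {poly rat}) = pZtoQ ('X^m - 1).
    by rewrite rmorphB rmorph1 /= map_polyXn.
  by rewrite ER rmorphM /= dvdp_mulIl.
by rewrite coprimepX /root !hornerE expr0n eqn0Ngt m0.
Qed.
Lemma t_le l k m : (k <= l)%N -> (tLM l m <= eLK l k m)%N.
Proof.
move=> kl; rewrite /tLM /eLK; case: ifP => // /andP[m0 ml].
rewrite leq_subLR.
have -> : l.+1 = ((l - k) + k.+1)%N by lia.
rewrite -ltnS ltn_divLR //.
have ea := divn_eq (l - k) m; have eb := divn_eq k m.
have ra := ltn_pmod (l - k) m0; have rb := ltn_pmod k m0.
move: ea eb ra rb; set a := (l - k)%N; set qa := (a %/ m)%N; set qb := (k %/ m)%N.
set ra' := (a %% m)%N; set rb' := (k %% m)%N. nia.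
Qed.

Lemma t_eq l m : (1 <= m <= l)%N -> eLK l m.-1 m = tLM l m.
Proof.
move=> /[dup] /andP[m0 ml] H; rewrite /tLM H /eLK.
rewrite (divn_small (m := m.-1)) ?prednK // addn0.
have -> : l.+1 = ((l - m.-1) + 1 * m)%N by lia.
by rewrite divnDMl // addnK.
Qed.

Theorem corollary4p2 (l : nat) :
  is_lgcd (fun k : 'I_l.+1 => lpoly (fLK l k))
          (lpoly (\prod_(1 <= m < l.+1) 'Phi_m ^+ tLM l m)).
Proof.
set g := \prod_(1 <= m < l.+1) 'Phi_m ^+ tLM l m.
have kl (k : 'I_l.+1) : (k <= l)%N by rewrite -ltnS.
split.
  move=> k; exists (\prod_(1 <= m < l.+1) 'Phi_m ^+ (eLK l k m - tLM l m)), 0%N.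
  rewrite /= !expr0 !mulr1 (@fLKE l k (kl k)) /g -big_split /=.
  by apply: eq_bigr => m _; rewrite -exprD subnKC // t_le.
move=> [dp dn] H.
have H1 : forall k : 'I_l.+1, exists n, (pZtoQ dp) %| pZtoQ (fLK l k) * 'X^n.
  move=> k; have [c [n E]] := H k; exists (dn + n)%N.
  move: E => /=; rewrite expr0 mulr1 => /(congr1 pZtoQ).
  by rewrite !rmorphM /= map_polyXn => ->; exact: dvdp_mulIl.
have [nf Hnf] := fin_all_exists H1.
set N := (\sum_(k < l.+1) nf k)%N.
have H2 : forall k : 'I_l.+1, pZtoQ dp %| pZtoQ (fLK l k) * 'X^N.
  move=> k; apply: dvdp_trans (Hnf k) _; apply: dvdp_mul (dvdpp _) (dvdp_exp2l _ _).
  by rewrite /N (bigD1 k) //= leq_addr.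
set s := index_iota 1 l.+1.
have Hf : forall k : 'I_l.+1,
    pZtoQ (fLK l k) = \prod_(m <- s) (pZtoQ 'Phi_m) ^+ eLK l k m.
  move=> k; rewrite (@fLKE l k (kl k)) rmorph_prod; apply: eq_bigr => m _.
  by rewrite rmorphXn.
have copXN : {in s, forall m, coprimep (pZtoQ 'Phi_m) ('X^N)}.
  move=> m; rewrite mem_index_iota => /andP[m0 _].
  exact/coprimep_expr/copX_Phi.
have key : pZtoQ dp %| (\prod_(m <- s) (pZtoQ 'Phi_m) ^+ tLM l m) * 'X^N.
  apply: (@abs_gcd _ (fun m => pZtoQ 'Phi_m) (tLM l) (pZtoQ dp) s _ _ _ ('X^N) (eLK l 0)).
  - exact: iota_uniq.
  - move=> i j; rewrite !mem_index_iota => /andP[i0 _] /andP[j0 _].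
    exact: cop_Phi.
  - move=> m ms; have := ms; rewrite mem_index_iota => /andP[m0 ml].
    have mk : (m.-1 < l.+1)%N by lia.
    exists ((\prod_(j <- s | j != m) (pZtoQ 'Phi_j) ^+ eLK l m.-1 j) * 'X^N); split.
      rewrite coprimepMr copXN // andbT big_seq_cond.
      apply: (big_ind (fun q => coprimep (pZtoQ 'Phi_m) q)); first exact: coprimep1.
        by move=> x y; rewrite coprimepMr => -> ->.
      move=> j /andP[js jm]; apply: coprimep_expr; apply: cop_Phi => //.
        by move: js; rewrite mem_index_iota => /andP[].
      by rewrite eq_sym.
    have := H2 (Ordinal mk); rewrite Hf /= (bigD1_seq m) ?iota_uniq //= t_eq ?m0 //.
    by rewrite mulrA.
  - exact: copXN.
  - by have := H2 ord0; rewrite Hf.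
have keyZ : dp %| g * 'X^N.
  rewrite -dvdp_rat_int.
  suff -> : pZtoQ (g * 'X^N) = (\prod_(m <- s) (pZtoQ 'Phi_m) ^+ tLM l m) * 'X^N by [].
  rewrite rmorphM rmorph_prod /= map_polyXn; congr (_ * _).
  by apply: eq_bigr => m _; rewrite rmorphXn.
have [r Er] := dvdpP_int keyZ.
have [c0 [n0 E0]] := H ord0.
have Hc : zcontents dp * zcontents c0 = 1.
  rewrite -zcontentsM; move: E0 => /=; rewrite expr0 mulr1 => <-.
  apply: zcontents_monic; rewrite (@fLKE l 0 (kl ord0)) monicMr ?monicXn //.
  by apply: monic_prod => m _; apply: monic_exp; exact: Cyclotomic_monic.
exists (zcontents c0 *: r * 'X^dn), N => /=.
rewrite expr0 mulr1 (zpolyEprim dp) -!mul_polyC.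
set zp := zprimitive dp in Er *.
have -> : (zcontents dp)%:P * zp * ((zcontents c0)%:P * r * 'X^dn)
    = ((zcontents dp)%:P * (zcontents c0)%:P) * (zp * r) * 'X^dn by ring.
by rewrite -polyCM Hc mul1r -Er exprD; ring.
Qed.
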